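(* Let $G$ be an unweighted undirected $n$-vertex graph, let $A$ be a $\beta$-additive clustering-based spanner of $G$ with clustering $\mathcal{C}$ and center map $\mathrm{cnt}$, and let $M$ be an $\alpha$-multiplicative EFT spanner of $G$. Let $H$ be the graph returned by Algorithm 2 (described in the context). Then $H$ has $O(|E(A)|+|E(M)|+n+|\mathcal{C}|^2)$ edges, and $H$ is a $(2\beta+\max\{2,\alpha-3\})$-additive EFT spanner of $G$, i.e. for every $e\in E(G)$ and all $s,t$ connected in $G-e$, $d_{H-e}(s,t)\le d_{G-e}(s,t)+2\beta+\max\{2,\alpha-3\}$.
   Context: $d_X$ is shortest-path distance in $X$; $|\pi|$ is the number of edges of path $\pi$. An $\alpha$-multiplicative EFT spanner is a subgraph $M$ with $d_{M-e}(s,t)\le\alpha\,d_{G-e}(s,t)$ for all edges $e$ and vertices $s,t$. A clustering of $G$ is a partition $\mathcal{C}$ of a subset of $V(G)$ into clusters; each cluster $C$ has a designated center vertex in $C$, and for a clustered vertex $v$, $\mathrm{cnt}(v)$ is the center of its cluster; every non-center clustered vertex is adjacent in $G$ to its center. Unclustered vertices are those in no cluster. A $\beta$-additive spanner $A$ (i.e. $d_A(u,v)\le d_G(u,v)+\beta$ for all $u,v$) is clustering-based with clustering $\mathcal{C}$ if: (i) $A$ contains all edges of $G$ incident to unclustered vertices; (ii) $A$ contains every edge $(v,\mathrm{cnt}(v))$ for clustered $v\neq\mathrm{cnt}(v)$; (iii) for all $u,v\in V(G)$ with $v$ clustered there is a path $\tilde\pi(u,v)$ in $A$ satisfying one of: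 (P1) $|\tilde\pi(u,v)|\le d_G(u,v)+\beta-2$; (P2) $|\tilde\pi(u,v)|=d_G(u,v)+\beta-1$ and either $v=\mathrm{cnt}(v)$ or the last edge of $\tilde\pi(u,v)$ is $(\mathrm{cnt}(v),v)$; (P3) $|\tilde\pi(u,v)|=d_G(u,v)+\beta$, $v\ne\mathrm{cnt}(v)$, and the last edge of $\tilde\pi(u,v)$ is $(\mathrm{cnt}(v),v)$. For clusters $C,C'$ let $\delta(C,C')$ be the set of edges of $G$ with one endpoint in $C$ and the other in $C'$. Algorithm 2: start with $E'=\emptyset$. For every cluster $C$ and every $v\in C$, if there is an edge $(v,x)\in E(G)$ with $x\in C\setminus\{\mathrm{cnt}(v)\}$, add one such edge to $E'$. For every pair of distinct clusters $C,C'$: if $\delta(C,C')$ contains two vertex-disjoint edges, add two such edges to $E'$; else if it contains two distinct edges, add two such edges; otherwise add all of $\delta(C,C')$ (at most one edge). Return $H=(V(G),E'\cup E(M)\cup E(A))$. *)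

(* Defs.v *)
(* Graphs: vertex set = a finType T, edge set = {set {set T}}
   whose elements are 2-element sets {u,v}. *)
From HB Require Import structures.
From mathcomp Require Import all_boot all_order all_algebra.
From Stdlib Require Import ClassicalEpsilon.
Set Implicit Arguments. Unset Strict Implicit. Unset Printing Implicit Defensive.
Import Order.TTheory GRing.Theory Num.Theory.

Section Graphs.
Variable T : finType.

Definition simple_graph (E : {set {set T}}) : Prop :=
  forall e, e \in E -> #|e| = 2.

Definition adj (E : {set {set T}}) : rel T := fun u v => [set u; v] \in E.

(* a (simple) path from s to t with edges in E; its vertices are s :: p,
   its number of edges is size p *)
Definition is_path (E : {set {set T}}) (s t : T) (p : seq T) : bool :=
  [&& path (adj E) s p, last s p == t & uniq (s :: p)].

Definition pathn (E : {set {set T}}) (s t : T) (k : nat) : bool :=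
  [exists p : k.-tuple T, is_path E s t p].

Definition connected (E : {set {set T}}) (s t : T) : Prop :=
  exists k, pathn E s t k.

(* shortest-path distance d_E(s,t) (defined as 0 when s,t are disconnected;
   only used for connected pairs) *)
Definition dist (E : {set {set T}}) (s t : T) : nat :=
  match excluded_middle_informative (connected E s t) with
  | left h => ex_minn h
  | right _ => 0
  end.

Definition last_edge (s : T) (p : seq T) (c v : T) : Prop :=
  exists q, s :: p = rcons (rcons q c) v.

Definition cnt (cl : {set {set T}}) (center : {set T} -> T) (v : T) : T :=
  center (pblock cl v).

Definition clustering (G : {set {set T}}) (cl : {set {set T}})
    (center : {set T} -> T) : Prop :=
  [/\ trivIset cl, set0 \notin cl,
      (forall C, C \in cl -> center C \in C) &
      (forall v, v \in cover cl -> v != cnt cl center v ->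
                 [set v; cnt cl center v] \in G)].

Definition additive_spanner (G A : {set {set T}}) (beta : nat) : Prop :=
  A \subset G /\
  forall u v, connected G u v ->
    connected A u v /\ dist A u v <= dist G u v + beta.

Definition clustering_based (G A : {set {set T}}) (beta : nat)
    (cl : {set {set T}}) (center : {set T} -> T) : Prop :=
  [/\ additive_spanner G A beta,
      clustering G cl center,
      (forall u v, [set u; v] \in G -> u \notin cover cl -> [set u; v] \in A),
      (forall v, v \in cover cl -> v != cnt cl center v ->
                 [set v; cnt cl center v] \in A) &
      (forall u v, v \in cover cl -> connected G u v ->
         exists p, is_path A u v p /\
           [\/ size p + 2 <= dist G u v + beta,
               size p + 1 = dist G u v + beta /\
                 (v = cnt cl center v \/ last_edge u p (cnt cl center v) v)
             | size p = dist G u v + beta /\ v != cnt cl center v /\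
                 last_edge u p (cnt cl center v) v])].

Definition mult_EFT_spanner (R : realFieldType) (G M : {set {set T}})
    (alpha : R) : Prop :=
  M \subset G /\
  forall e, e \in G -> forall s t, connected (G :\ e) s t ->
    connected (M :\ e) s t /\
    ((dist (M :\ e) s t)%:R <= alpha * (dist (G :\ e) s t)%:R)%R.

Definition delta (G : {set {set T}}) (C C' : {set T}) : {set {set T}} :=
  [set e in G | [exists u in C, exists w in C', e == [set u; w]]].

(* Algorithm 2, step 1: the (optional) edge chosen for clustered v *)
Definition alg2_pick_spec (G : {set {set T}}) (cl : {set {set T}})
    (center : {set T} -> T) (pick : T -> {set {set T}}) : Prop :=
  forall v, v \in cover cl ->
    if [exists x in pblock cl v :\ cnt cl center v, [set v; x] \in G]
    then exists2 x, x \in pblock cl v :\ cnt cl center v &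
           [set v; x] \in G /\ pick v = [set [set v; x]]
    else pick v = set0.

(* Algorithm 2, step 2: edges chosen for an (unordered) pair of clusters *)
Definition alg2_pair_spec (G : {set {set T}}) (cl : {set {set T}})
    (pp : {set T} -> {set T} -> {set {set T}}) : Prop :=
  forall C C', C \in cl -> C' \in cl -> C != C' ->
    pp C C' = pp C' C /\
    let D := delta G C C' in
    if [exists e1 in D, exists e2 in D, [disjoint e1 & e2]] then
      exists e1 e2, [/\ e1 \in D, e2 \in D, [disjoint e1 & e2] &
                        pp C C' = [set e1; e2]]
    else if [exists e1 in D, exists e2 in D, e1 != e2] then
      exists e1 e2, [/\ e1 \in D, e2 \in D, e1 != e2 &
                        pp C C' = [set e1; e2]]
    else pp C C' = D.

Definition alg2_Eprime (cl : {set {set T}}) (pick : T -> {set {set T}})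
    (pp : {set T} -> {set T} -> {set {set T}}) : {set {set T}} :=
  (\bigcup_(v in cover cl) pick v) :|:
  (\bigcup_(C in cl) \bigcup_(C' in cl | C' != C) pp C C').

Definition alg2_H (A M : {set {set T}}) (cl : {set {set T}})
    (pick : T -> {set {set T}})
    (pp : {set T} -> {set T} -> {set {set T}}) : {set {set T}} :=
  alg2_Eprime cl pick pp :|: M :|: A.

End Graphs.

(* Main.v *)
Require Import Defs.
From HB Require Import structures.
From mathcomp Require Import all_boot all_order all_algebra.
From Stdlib Require Import Classical ClassicalEpsilon Lia.
From mathcomp Require Import zify.
Import Order.TTheory GRing.Theory Num.Theory.
Set Implicit Arguments. Unset Strict Implicit. Unset Printing Implicit Defensive.

Section Walks.
Variable T : finType.
Implicit Types (E F : {set {set T}}) (e : {set T}) (a b c : T) (p : seq T).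

Definition walk E a b n := exists p, [/\ path (adj E) a p, last a p = b & size p <= n].

Lemma adj_sym E a b : adj E a b = adj E b a.
Proof. by rewrite /adj setUC. Qed.

Lemma walk_refl E a n : walk E a a n.
Proof. by exists [::]. Qed.

Lemma walk_edge E a b : [set a; b] \in E -> walk E a b 1.
Proof. by move=> h; exists [:: b]; rewrite /= andbT. Qed.

Lemma walk_le E a b n m : n <= m -> walk E a b n -> walk E a b m.
Proof. by move=> nm [p [h1 h2 h3]]; exists p; split => //; apply: leq_trans nm. Qed.

Lemma walk_trans E a b c n m : walk E a b n -> walk E b c m -> walk E a c (n + m).
Proof.
move=> [p [h1 h2 h3]] [q [k1 k2 k3]]; exists (p ++ q); split.
- by rewrite cat_path h1 h2 k1.
- by rewrite last_cat h2.
- by rewrite size_cat leq_add.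
Qed.

Lemma walk_sym E a b n : walk E a b n -> walk E b a n.
Proof.
move=> [p [h1 h2 h3]]; exists (rev (belast a p)); split.
- rewrite -h2 rev_path; apply: sub_path h1 => x y /=; by rewrite adj_sym.
- case: p h1 h2 h3 => [|x p] //= _ <- _.
  by rewrite rev_cons last_rcons.
- by rewrite size_rev size_belast.
Qed.

Lemma walk_mono E F a b n : E \subset F -> walk E a b n -> walk F a b n.
Proof.
move=> sEF [p [h1 h2 h3]]; exists p; split => //.
by apply: sub_path h1 => x y; rewrite /adj => /(subsetP sEF).
Qed.

Lemma walk_dist E a b n : walk E a b n -> connected E a b /\ dist E a b <= n.
Proof.
move=> [p [h1 h2 h3]].
case: (shortenP h1) h2 => p' h1' u' sub' h2.
have hp' : pathn E a b (size p').
  apply/existsP; exists (in_tuple p'); rewrite /is_path h1' u' andbT.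
  by apply/eqP.
have hc : connected E a b by exists (size p').
split => //.
rewrite /dist; case: excluded_middle_informative => // hc'.
case: ex_minnP => m _ hmin.
apply: leq_trans (hmin _ hp') _.
apply: leq_trans h3.
by apply: uniq_leq_size => //; case/andP: u'.
Qed.

Lemma dist_walk E a b : connected E a b ->
  exists p, [/\ path (adj E) a p, last a p = b & size p = dist E a b].
Proof.
move=> hc; rewrite /dist; case: excluded_middle_informative => // hc'.
case: ex_minnP => m hm _.
case/existsP: hm => q /and3P [k1 /eqP k2 _].
by exists q; rewrite size_tuple.
Qed.

Lemma is_path_walk E a b p : is_path E a b p -> walk E a b (size p).
Proof. by case/and3P => h1 /eqP h2 _; exists p. Qed.

End Walks.

Section Split.
Variable T : finType.
Implicit Types (E F : {set {set T}}) (e : {set T}) (a b c : T) (p : seq T).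

Lemma adjD1 E e a b : adj (E :\ e) a b = ([set a; b] != e) && adj E a b.
Proof. by rewrite /adj in_setD1. Qed.

Lemma split_avoid E e a p : path (adj E) a p -> ~~ path (adj (E :\ e)) a p ->
  exists p1 y p2, [/\ p = p1 ++ y :: p2, path (adj (E :\ e)) a p1,
     [set last a p1; y] = e & path (adj E) y p2].
Proof.
elim: p a => [|x p IH] a //= /andP [hax hp].
rewrite adjD1 hax andbT.
case: eqP => [hx _|hne /= hnp].
  by exists [::], x, p; split.
have [p1 [y [p2 [-> k1 k2 k3]]]] := IH x hp hnp.
exists (x :: p1), y, p2; split => //=.
by rewrite adjD1 hax andbT k1 andbT; apply/eqP.
Qed.

Lemma avoid_suffix E e x y p : x \in e -> x \notin y :: p ->
  path (adj E) y p -> path (adj (E :\ e)) y p.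
Proof.
move=> xe; elim: p y => [|z p IH] y //= hx /andP [hyz hp].
apply/andP; split; last first.
  by apply: IH hp; move: hx; rewrite !inE !negb_or => /andP [_ /andP [-> ->]].
rewrite adjD1 hyz andbT.
apply/eqP => he; move: xe; rewrite -he !inE => /orP [] /eqP hh; move: hx;
  by rewrite !inE hh eqxx ?orbT.
Qed.

Lemma split_avoid_uniq E e a v p : path (adj E) a p -> last a p = v ->
  uniq (a :: p) -> ~~ path (adj (E :\ e)) a p ->
  exists x y n1 n2, [/\ e = [set x; y], walk (E :\ e) a x n1,
     walk (E :\ e) y v n2 & n1 + n2 + 1 <= size p].
Proof.
move=> hp hl hu hnp.
have [p1 [y [p2 [hdef k1 k2 k3]]]] := split_avoid hp hnp.
exists (last a p1), y, (size p1), (size p2); split => //.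
- by exists p1.
- exists p2; split.
  + apply: (avoid_suffix (x := last a p1)) => //.
    * by rewrite -k2 !inE eqxx.
    * move: hu; rewrite hdef -cat_cons cat_uniq => /and3P [_ hh _].
      apply/negP => hin; move/hasP: hh; apply; exists (last a p1) => //.
      exact: mem_last.
  + by move: hl; rewrite hdef last_cat.
  + by [].
- by rewrite hdef size_cat /=; lia.
Qed.

Lemma combine_N E e s t v P Q :
  path (adj E) s P -> last s P = v -> uniq (s :: P) -> ~~ path (adj (E :\ e)) s P ->
  path (adj E) t Q -> last t Q = v -> uniq (t :: Q) -> ~~ path (adj (E :\ e)) t Q ->
  exists n, walk (E :\ e) s t n /\ n + 2 <= size P + size Q.
Proof.
move=> h1 h2 h3 h4 k1 k2 k3 k4.
have [x [y [n1 [n2 [he w1 w2 hn]]]]] := split_avoid_uniq h1 h2 h3 h4.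
have [x' [y' [m1 [m2 [he' v1 v2 hm]]]]] := split_avoid_uniq k1 k2 k3 k4.
have [xx'|nxx'] := eqVneq x x'.
  exists (n1 + m1); split.
    by apply: walk_trans w1 _; rewrite xx'; apply: walk_sym.
  by apply: leq_trans (leq_add hn hm); lia.
have hx : x = y'.
  have : x \in e by rewrite he !inE eqxx.
  by rewrite he' !inE (negbTE nxx') /= => /eqP.
have hx' : x' = y.
  have : x' \in e by rewrite he' !inE eqxx.
  by rewrite he !inE eq_sym (negbTE nxx') /= => /eqP.
exists (n1 + m2 + n2 + m1); split.
  apply: (walk_trans _ (walk_sym v1)).
  rewrite hx'; apply: (walk_trans _ (walk_sym w2)).
  by apply: walk_trans w1 _; rewrite hx.
by apply: leq_trans (leq_add hn hm); lia.
Qed.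

End Split.

Section Side.
Variable T : finType.
Implicit Types (E F : {set {set T}}) (e : {set T}) (a b c : T) (p : seq T).

Lemma last_edge_prefix E r P c v : last_edge r P c v -> path (adj E) r P ->
  exists q, [/\ path (adj E) r q, last r q = c, size q + 1 = size P & adj E c v].
Proof.
case=> q; case: q => [|x q] /=.
  by case=> -> ->; rewrite /= andbT => h; exists [::].
case=> -> ->; rewrite rcons_path last_rcons => /andP [h1 h2].
exists (rcons q c); rewrite last_rcons size_rcons !size_rcons h2; split => //.
by rewrite addn1.
Qed.

Lemma side (G A : {set {set T}}) beta cl center e r v k P :
  (forall w, w \in cover cl -> w != cnt cl center w -> [set w; cnt cl center w] \in A) ->
  #|e| = 2 -> v \in cover cl -> is_path A r v P ->
  [\/ size P + 2 <= dist G r v + beta,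
      size P + 1 = dist G r v + beta /\
        (v = cnt cl center v \/ last_edge r P (cnt cl center v) v)
    | size P = dist G r v + beta /\ v != cnt cl center v /\
        last_edge r P (cnt cl center v) v] ->
  path (adj (A :\ e)) r P -> dist G r v <= k ->
  ([set v; cnt cl center v] = e -> size P + 2 <= k + beta) /\
  ([set v; cnt cl center v] != e ->
     exists n, walk (A :\ e) r (cnt cl center v) n /\ n + 1 <= k + beta).
Proof.
set c := cnt cl center v.
move=> hA he2 hv hP hcls hav hk.
have hPl : last r P = v by case/and3P: hP => _ /eqP.
split.
  move=> hve.
  have vc : v != c.
    apply/eqP => vc; move: he2; rewrite -hve -vc setUid cards1 //.
  have noedge : forall P', last_edge r P' c v -> path (adj (A :\ e)) r P' -> False.
    move=> P' hl hp; have [q [_ _ _]] := last_edge_prefix hl hp.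
    by rewrite adjD1 /c setUC hve eqxx.
  case: hcls => [h|[h [h'|h']]|[h [h' h'']]].
  - by apply: leq_trans h _; rewrite leq_add2r.
  - by move: vc; rewrite h' eqxx.
  - by case: (noedge _ h' hav).
  - by case: (noedge _ h'' hav).
move=> hne.
case: hcls => [h|[h [h'|h']]|[h [h' h'']]].
- have [vc|vc] := eqVneq v c.
    exists (size P); split; first by rewrite -vc; exists P.
    by apply: leq_trans (_ : size P + 2 <= k + beta); [rewrite leq_add2l|apply: leq_trans h _; rewrite leq_add2r].
  exists (size P + 1); split.
    apply: walk_trans (walk_edge _); first by exists P.
    by rewrite hPl in_setD1 hne hA.
  by rewrite -addnA; apply: leq_trans h _; rewrite leq_add2r.
- exists (size P); split; first by rewrite -h'; exists P.
  lia.
- have [q [k1 k2 k3 k4]] := last_edge_prefix h' hav.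
  exists (size q); split; first by exists q.
  lia.
- have [q [k1 k2 k3 k4]] := last_edge_prefix h'' hav.
  exists (size q); split; first by exists q.
  lia.
Qed.

End Side.

Section Good.
Variable T : finType.
Implicit Types (E F : {set {set T}}) (e : {set T}) (a b c : T) (p : seq T).

Lemma disj2 (u w : T) (B : {set T}) : u \notin B -> w \notin B -> [disjoint [set u; w] & B].
Proof.
move=> hu hw; rewrite disjoint_subset; apply/subsetP => z /set2P [] -> ;
  by rewrite inE.
Qed.

Lemma in_cover (cl : {set {set T}}) C x : C \in cl -> x \in C -> x \in cover cl.
Proof. by move=> hC hx; apply/bigcupP; exists C. Qed.

Lemma good_edge (G A : {set {set T}}) cl center pp e u w :
  clustering G cl center ->
  (forall v, v \in cover cl -> v != cnt cl center v -> [set v; cnt cl center v] \in A) ->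
  alg2_pair_spec G cl pp ->
  u \in cover cl -> w \in cover cl -> pblock cl u != pblock cl w ->
  [set u; w] \in G -> [set u; w] != e ->
  [set u; cnt cl center u] != e -> [set w; cnt cl center w] != e ->
  exists x y, [/\ [set x; y] \in pp (pblock cl u) (pblock cl w),
    walk (A :\ e) (cnt cl center u) x 1, [set x; y] != e &
    walk (A :\ e) y (cnt cl center w) 1].
Proof.
move=> [htriv h0 hcen _] hA hpp hu hw hneq huw huwe hue hwe.
set Cu := pblock cl u; set Cw := pblock cl w.
set cu := cnt cl center u; set cw := cnt cl center w.
have hCu : Cu \in cl by apply: pblock_mem.
have hCw : Cw \in cl by apply: pblock_mem.
have hdis : forall z, z \in Cu -> z \in Cw -> False.
  move=> z z1 z2; move/trivIsetP: htriv => /(_ _ _ hCu hCw hneq) hd.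
  by move: (disjointFr hd z1); rewrite z2.
have cuCu : cu \in Cu by apply: hcen.
have cwCw : cw \in Cw by apply: hcen.
have uCu : u \in Cu by rewrite /Cu mem_pblock.
have wCw : w \in Cw by rewrite /Cw mem_pblock.
have cntu : forall x, x \in Cu -> cnt cl center x = cu.
  by move=> x hx; rewrite /cnt (same_pblock htriv hx).
have cntw : forall x, x \in Cw -> cnt cl center x = cw.
  by move=> x hx; rewrite /cnt (same_pblock htriv hx).
pose badu x := (x != cu) && ([set cu; x] == e).
pose badw y := (y != cw) && ([set y; cw] == e).
have walku : forall x, x \in Cu -> ~~ badu x -> walk (A :\ e) cu x 1.
  move=> x hx; rewrite /badu negb_and negbK; have [->|xc] := eqVneq x cu.
    by move=> _; apply: walk_refl.
  move=> /= hxe; apply: walk_edge; rewrite in_setD1 hxe /= setUC.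
  by rewrite -(cntu _ hx) hA ?(cntu _ hx) //; apply: in_cover hCu hx.
have walkw : forall y, y \in Cw -> ~~ badw y -> walk (A :\ e) y cw 1.
  move=> y hy; rewrite /badw negb_and negbK; have [->|yc] := eqVneq y cw.
    by move=> _; apply: walk_refl.
  move=> /= hye; apply: walk_edge; rewrite in_setD1 hye /=.
  by rewrite -(cntw _ hy) hA ?(cntw _ hy) //; apply: in_cover hCw hy.
have F1 : forall x y, x \in Cu -> y \in Cw -> [set x; y] = e ->
    (forall x', x' \in Cu -> ~~ badu x') /\ (forall y', y' \in Cw -> ~~ badw y').
  move=> x y hx hy hxy; split.
    move=> x' hx'; apply/negP => /andP [_ /eqP he].
    have : y \in e by rewrite -hxy !inE eqxx orbT.
    by rewrite -he => /set2P [] hh; apply: (hdis y) => //; rewrite hh.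
  move=> y' hy'; apply/negP => /andP [_ /eqP he].
  have : x \in e by rewrite -hxy !inE eqxx.
  by rewrite -he => /set2P [] hh; apply: (hdis x) => //; rewrite hh.
have F2 : forall x y, badu x -> badw y -> x \in Cu -> y \in Cw -> False.
  move=> x y /andP [_ /eqP hx] /andP [_ /eqP hy] hxC hyC.
  have : cu \in e by rewrite -hx !inE eqxx.
  by rewrite -hy => /set2P [] hh; apply: (hdis cu); rewrite // hh.
have F3 : forall x1 x2, badu x1 -> badu x2 -> x1 = x2.
  move=> x1 x2 /andP [n1 /eqP h1] /andP [n2 /eqP h2].
  have : x1 \in e by rewrite -h1 !inE eqxx orbT.
  by rewrite -h2 => /set2P [] hh //; move: n1; rewrite hh eqxx.
have F3w : forall y1 y2, badw y1 -> badw y2 -> y1 = y2.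
  move=> y1 y2 /andP [n1 /eqP h1] /andP [n2 /eqP h2].
  have : y1 \in e by rewrite -h1 !inE eqxx.
  by rewrite -h2 => /set2P [] hh //; move: n1; rewrite hh eqxx.
have F4u : ~~ badu u by rewrite /badu setUC (negbTE hue) andbF.
have F4w : ~~ badw w by rewrite /badw (negbTE hwe) andbF.
have decD : forall f, f \in delta G Cu Cw -> exists x y, [/\ x \in Cu, y \in Cw & f = [set x; y]].
  move=> f; rewrite inE => /andP [_ /exists_inP [x hx /exists_inP [y hy /eqP ->]]].
  by exists x, y.
have uwD : [set u; w] \in delta G Cu Cw.
  rewrite inE huw /=; apply/exists_inP; exists u => //; apply/exists_inP; exists w => //.
have conclude : forall x y, x \in Cu -> y \in Cw -> [set x; y] \in pp Cu Cw ->
    [set x; y] != e -> ~~ badu x -> ~~ badw y ->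
    exists x y, [/\ [set x; y] \in pp Cu Cw, walk (A :\ e) cu x 1, [set x; y] != e &
      walk (A :\ e) y cw 1].
  move=> x y hx hy hin hne bx bw; exists x, y; split => //.
    by apply: walku.
  by apply: walkw.
have [_ hsp] := hpp _ _ hCu hCw hneq.
move: hsp; cbv zeta; set D := delta G Cu Cw.
case: ifP => [_ [e1 [e2 [i1 i2 hd hppe]]]|hnd].
  have [x1 [y1 [hx1 hy1 he1]]] := decD _ i1.
  have [x2 [y2 [hx2 hy2 he2]]] := decD _ i2.
  subst e1 e2.
  have nx : x1 != x2.
    by apply/eqP => hh; have := disjointFr hd (set21 x1 y1); rewrite hh set21.
  have ny : y1 != y2.
    by apply/eqP => hh; have := disjointFr hd (set22 x1 y1); rewrite hh set22.
  have m1 : [set x1; y1] \in pp Cu Cw by rewrite hppe set21.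
  have m2 : [set x2; y2] \in pp Cu Cw by rewrite hppe set22.
  have [e1e|e1e] := eqVneq [set x1; y1] e.
    have [B1 B2] := F1 _ _ hx1 hy1 e1e.
    apply: conclude hx2 hy2 m2 _ (B1 _ hx2) (B2 _ hy2).
    apply/eqP => e2e; have : x1 \in [set x2; y2] by rewrite e2e -e1e !inE eqxx.
    by rewrite (disjointFr hd) // !inE eqxx.
  have [e2e|e2e] := eqVneq [set x2; y2] e.
    have [B1 B2] := F1 _ _ hx2 hy2 e2e.
    exact: conclude hx1 hy1 m1 e1e (B1 _ hx1) (B2 _ hy1).
  case b1: (badu x1); case b2: (badw y1).
  - by case: (F2 _ _ b1 b2 hx1 hy1).
  - case b3: (badu x2); first by move: nx; rewrite (F3 _ _ b1 b3) eqxx.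
    case b4: (badw y2); first by case: (F2 _ _ b1 b4 hx1 hy2).
    by apply: conclude hx2 hy2 m2 e2e _ _; rewrite ?b3 ?b4.
  - case b3: (badu x2); first by case: (F2 _ _ b3 b2 hx2 hy1).
    case b4: (badw y2); first by move: ny; rewrite (F3w _ _ b2 b4) eqxx.
    by apply: conclude hx2 hy2 m2 e2e _ _; rewrite ?b3 ?b4.
  - by apply: conclude hx1 hy1 m1 e1e _ _; rewrite ?b1 ?b2.
move/negbT: hnd => nodisj.
have share : forall x y, x \in Cu -> y \in Cw -> [set x; y] \in D -> x = u \/ y = w.
  move=> x y hx hy hxy.
  have [hh|hh] := boolP ((u \in [set x; y]) || (w \in [set x; y])); last first.
    move: hh; rewrite negb_or => /andP [n1 n2].
    move: nodisj; rewrite negb_exists_in => /forall_inP /(_ _ uwD).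
    by rewrite negb_exists_in => /forall_inP /(_ _ hxy); rewrite disj2.
  case/orP: hh => /set2P [] hh.
  - by left.
  - by case: (hdis u) => //; rewrite hh.
  - by case: (hdis w) => //; rewrite hh.
  - by right.
case: ifP => [_ [e1 [e2 [i1 i2 hne hppe]]]|_ hppe]; last first.
  by apply: conclude uCu wCw _ huwe F4u F4w; rewrite hppe.
have [x1 [y1 [hx1 hy1 he1]]] := decD _ i1.
have [x2 [y2 [hx2 hy2 he2]]] := decD _ i2.
have m1 : [set x1; y1] \in pp Cu Cw by rewrite hppe -he1 set21.
have m2 : [set x2; y2] \in pp Cu Cw by rewrite hppe -he2 set22.
rewrite he1 in i1 hne; rewrite he2 in i2 hne.
have [e1e|e1e] := eqVneq [set x1; y1] e.
  have [B1 B2] := F1 _ _ hx1 hy1 e1e.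
  apply: conclude hx2 hy2 m2 _ (B1 _ hx2) (B2 _ hy2).
  by rewrite -e1e eq_sym.
have [e2e|e2e] := eqVneq [set x2; y2] e.
  have [B1 B2] := F1 _ _ hx2 hy2 e2e.
  exact: conclude hx1 hy1 m1 e1e (B1 _ hx1) (B2 _ hy1).
case b1: (badu x1); case b2: (badw y1).
- by case: (F2 _ _ b1 b2 hx1 hy1).
- case b3: (badu x2); last first.
    case b4: (badw y2); first by case: (F2 _ _ b1 b4 hx1 hy2).
    by apply: conclude hx2 hy2 m2 e2e _ _; rewrite ?b3 ?b4.
  have ex12 := F3 _ _ b1 b3.
  case: (share _ _ hx1 hy1 i1) => hh1.
    by move: F4u; rewrite -hh1 b1.
  case: (share _ _ hx2 hy2 i2) => hh2.
    by move: F4u; rewrite -hh2 b3.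
  by move: hne; rewrite ex12 hh1 hh2 eqxx.
- case b3: (badu x2); first by case: (F2 _ _ b3 b2 hx2 hy1).
  case b4: (badw y2); last by apply: conclude hx2 hy2 m2 e2e _ _; rewrite ?b3 ?b4.
  have ey12 := F3w _ _ b2 b4.
  case: (share _ _ hx1 hy1 i1) => hh1; last by move: F4w; rewrite -hh1 b2.
  case: (share _ _ hx2 hy2 i2) => hh2; last by move: F4w; rewrite -hh2 b4.
  by move: hne; rewrite ey12 hh1 hh2 eqxx.
- by apply: conclude hx1 hy1 m1 e1e _ _; rewrite ?b1 ?b2.
Qed.

End Good.

From mathcomp Require Import lra.

Section Real.
Variable R : realFieldType.
Local Open Scope ring_scope.

Lemma fin1 (d D b : nat) (alpha : R) : (d <= D + 2 * b + 2)%N ->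
  (d%:R <= D%:R + (2 * b)%:R + Num.max 2 (alpha - 3) :> R)%R.
Proof.
rewrite -(ler_nat R) !natrD => h.
have hm : (2%:R : R) <= Num.max 2 (alpha - 3) by rewrite le_max lexx.
lra.
Qed.

Lemma fin2 (d D b dm : nat) (alpha : R) : (d + 3 <= D + 2 * b + dm)%N ->
  (dm%:R <= alpha)%R ->
  (d%:R <= D%:R + (2 * b)%:R + Num.max 2 (alpha - 3) :> R)%R.
Proof.
rewrite -(ler_nat R) !natrD => h ha.
have hm : (alpha - 3%:R : R) <= Num.max 2 (alpha - 3) by rewrite le_max lexx orbT.
lra.
Qed.

End Real.

Lemma ivt (P Q : nat -> Prop) (D : nat) : P 0 -> Q D ->
  (exists k, k <= D /\ (P k <-> Q k)) \/ (exists i, i < D /\ P i /\ Q i.+1).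
Proof.
move=> h0 hD.
apply: NNPP => hn.
have hall : forall k, k <= D -> P k.
  elim=> [|k IH] hk //.
  have hPk := IH (ltnW hk).
  have nQ : ~ Q k.+1 by move=> hq; apply: hn; right; exists k.
  apply: NNPP => nP; apply: hn; left; exists k.+1; split => //; tauto.
apply: hn; left; exists D; split => //; split => // _; exact: hall.
Qed.

Section Main.
Variable T : finType.
Implicit Types (E F : {set {set T}}) (e : {set T}) (a b c : T) (p : seq T).

Lemma is_path_nil E a p : is_path E a a p -> p = [::].
Proof.
case: p => [|x p] // /and3P [_ /eqP hl hu].
have hm : last x p \in x :: p by apply: mem_last.
move: hu; rewrite cons_uniq => /andP [hn _].
by move: hn; rewrite -{1}hl /= hm.
Qed.

Lemma dist_walk' E a b : connected E a b ->
  exists p, is_path E a b p /\ size p = dist E a b.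
Proof.
move=> hc; rewrite /dist; case: excluded_middle_informative => // hc'.
case: ex_minnP => m hm _.
case/existsP: hm => q hq.
by exists q; rewrite size_tuple.
Qed.

Lemma connected_sym E a b : connected E a b -> connected E b a.
Proof.
move=> /dist_walk' [p [/is_path_walk hw _]].
by case: (walk_dist (walk_sym hw)).
Qed.

End Main.

Lemma stretch (R : realFieldType) (T : finType) (G A M : {set {set T}})
    (beta : nat) (alpha : R) (cl : {set {set T}}) (center : {set T} -> T)
    (pick : T -> {set {set T}}) (pp : {set T} -> {set T} -> {set {set T}}) :
  simple_graph G -> clustering_based G A beta cl center ->
  mult_EFT_spanner G M alpha -> alg2_pair_spec G cl pp ->
  forall e, e \in G -> forall s t, connected (G :\ e) s t ->
    connected (alg2_H A M cl pick pp :\ e) s t /\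
    ((dist (alg2_H A M cl pick pp :\ e) s t)%:R <=
       (dist (G :\ e) s t)%:R + (2 * beta)%:R + Num.max 2 (alpha - 3) :> R)%R.
Proof.
move=> hsimp [[hAG hAd] hclus hT2 hA2 hcls] [hMG hM] hpp e he s t hst.
set H := alg2_H A M cl pick pp.
set D := dist (G :\ e) s t.
have he2 : #|e| = 2 := hsimp e he.
have AH : A :\ e \subset H :\ e.
  by apply: setSD; apply/subsetP => x hx; rewrite /H /alg2_H !in_setU hx !orbT.
have MH : M :\ e \subset H :\ e.
  by apply: setSD; apply/subsetP => x hx; rewrite /H /alg2_H !in_setU hx !orbT.
suff [n [hw hn]] : exists n, walk (H :\ e) s t n /\
    ((n <= D + 2 * beta + 2)%N \/
     exists dm, (n + 3 <= D + 2 * beta + dm)%N /\ (dm%:R <= alpha :> R)%R).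
  have [hc hd] := walk_dist hw; split => //.
  case: hn => [h|[dm [h1 h2]]].
    by apply: fin1; apply: leq_trans hd h.
  apply: (fin2 (dm := dm)) => //; apply: leq_trans h1.
  by rewrite leq_add2r.
have [p [hp hpsz]] := dist_walk' hst.
move: hp => /and3P [hpi /eqP hpl _]; rewrite -/D in hpsz.
pose z k := nth s (s :: p) k.
have zD : z D = t.
  by rewrite /z -hpsz -hpl; exact: (nth_last s (s :: p)).
have zadj : forall k, k < D -> adj (G :\ e) (z k) (z k.+1).
  move=> k hk; move/(pathP s): hpi => /(_ k); rewrite hpsz => /(_ hk).
  by [].
have GeG : G :\ e \subset G := subD1set G e.
have ws : forall k, k <= D -> walk (G :\ e) s (z k) k.
  elim=> [|k IH] hk; first exact: walk_refl.
  apply: (walk_le (n := k + 1)); first by rewrite addn1.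
  apply: (walk_trans (IH (ltnW hk))).
  apply: walk_edge; exact: (zadj _ hk).
have wt' : forall m, m <= D -> walk (G :\ e) (z (D - m)) t m.
  elim=> [|m IH] hm; first by rewrite subn0 zD; apply: walk_refl.
  apply: (walk_le (n := 1 + m)); first by rewrite add1n.
  apply: walk_trans (IH (ltnW hm)).
  have h1 : D - m.+1 < D by clear -hm; lia.
  have h2 : (D - m.+1).+1 = D - m by clear -hm; lia.
  by have := zadj _ h1; rewrite h2 => /walk_edge.
have wt : forall k, k <= D -> walk (G :\ e) (z k) t (D - k).
  by move=> k hk; have := wt' (D - k) (leq_subr _ _); rewrite subKn.
have distGs : forall k, k <= D -> connected G s (z k) /\ dist G s (z k) <= k.
  by move=> k hk; apply: walk_dist (walk_mono GeG (ws k hk)).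
have distGt : forall k, k <= D -> connected G t (z k) /\ dist G t (z k) <= D - k.
  by move=> k hk; apply: walk_dist (walk_sym (walk_mono GeG (wt k hk))).
pose cls (r v : T) (P : seq T) :=
  [\/ size P + 2 <= dist G r v + beta,
      size P + 1 = dist G r v + beta /\
        (v = cnt cl center v \/ last_edge r P (cnt cl center v) v)
    | size P = dist G r v + beta /\ v != cnt cl center v /\
        last_edge r P (cnt cl center v) v].
have cand : forall r v k, connected G r v -> dist G r v <= k ->
    exists P, [/\ is_path A r v P, size P <= k + beta & (v \in cover cl -> cls r v P)].
  move=> r v k hc hk; case: (boolP (v \in cover cl)) => hv.
    have [P [hP hc']] := hcls r v hv hc; exists P; split => //.
    by case: hc' => [h|[h _]|[h _]]; clear -h hk; lia.
  have [hcA hdA] := hAd r v hc; have [P [hP hsz]] := dist_walk' hcA.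
  by exists P; split => //; clear -hsz hdA hk; lia.
have pwalkA : forall r v P, is_path A r v P -> path (adj (A :\ e)) r P ->
    walk (H :\ e) r v (size P).
  move=> r v P /and3P [_ /eqP hl _] hP; apply: walk_mono AH _.
  by exists P.
pose Sg k := exists P, [/\ is_path A s (z k) P, size P <= k + beta,
  (z k \in cover cl -> cls s (z k) P) & path (adj (A :\ e)) s P].
pose Tg k := exists Q, [/\ is_path A t (z k) Q, size Q <= D - k + beta,
  (z k \in cover cl -> cls t (z k) Q) & path (adj (A :\ e)) t Q].
have S0 : Sg 0.
  have [c1 c2] := distGs 0 (leq0n D).
  have [P [h1 h2 h3]] := cand s (z 0) 0 c1 c2.
  exists P; split => //.
  by have -> : P = [::] by apply: (is_path_nil (E := A) (a := s)).
have TD : Tg D.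
  have [c1 c2] := distGt D (leqnn D).
  have [Q [h1 h2 h3]] := cand t (z D) (D - D) c1 c2.
  exists Q; split => //.
  have h1' := h1; rewrite zD in h1'.
  by have -> : Q = [::] by apply: (is_path_nil h1').
case: (ivt S0 TD) => [[k [hk hiff]]|[i [hi [[P [P1 P2 P3 P4]] [Q [Q1 Q2 Q3 Q4]]]]]].
  case: (classic (Sg k)) => hS.
    have [P [P1 P2 P3 P4]] := hS.
    have [Q [Q1 Q2 Q3 Q4]] := hiff.1 hS.
    exists (size P + size Q); split.
      exact: walk_trans (pwalkA _ _ _ P1 P4) (walk_sym (pwalkA _ _ _ Q1 Q4)).
    by left; clear -P2 Q2 hk; lia.
  have hT : ~ Tg k by move=> h; apply: hS; apply/hiff.
  have [c1 c2] := distGs k hk.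
  have [P [P1 P2 P3]] := cand s (z k) k c1 c2.
  have [d1 d2] := distGt k hk.
  have [Q [Q1 Q2 Q3]] := cand t (z k) (D - k) d1 d2.
  have nP : ~~ path (adj (A :\ e)) s P by apply/negP => h; apply: hS; exists P.
  have nQ : ~~ path (adj (A :\ e)) t Q by apply/negP => h; apply: hT; exists Q.
  move: (P1) (Q1) => /and3P [p1 /eqP p2 p3] /and3P [q1 /eqP q2 q3].
  have [n [hwn hn]] := combine_N p1 p2 p3 nP q1 q2 q3 nQ.
  exists n; split; first exact: walk_mono AH hwn.
  by left; clear -hn P2 Q2 hk; lia.
set u := z i; set w := z i.+1.
have huw := zadj i hi; rewrite -/u -/w adjD1 in huw.
case/andP: huw => huwe huwG; rewrite /adj in huwG.
have wP := pwalkA _ _ _ P1 P4; have wQ := pwalkA _ _ _ Q1 Q4.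
case: (boolP ([set u; w] \in H)) => hH.
  exists (size P + 1 + size Q); split.
    apply: walk_trans (walk_sym wQ); apply: walk_trans wP _.
    by apply: walk_edge; rewrite in_setD1 huwe hH.
  by left; clear -P2 Q2 hi; lia.
have hu : u \in cover cl.
  apply: contraNT hH => hu; have := hT2 _ _ huwG hu.
  by rewrite /H /alg2_H !in_setU => ->; rewrite !orbT.
have hw : w \in cover cl.
  apply: contraNT hH => hw; rewrite setUC in huwG; have := hT2 _ _ huwG hw.
  by rewrite /H /alg2_H !in_setU setUC => ->; rewrite !orbT.
have [su1 su2] := side hA2 he2 hu P1 (P3 hu) P4 (distGs i (ltnW hi)).2.
have [tw1 tw2] := side hA2 he2 hw Q1 (Q3 hw) Q4 (distGt i.+1 hi).2.
have hwe1 : walk (G :\ e) u w 1 by apply: walk_edge; rewrite in_setD1 huwe.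
have hcGe : connected (G :\ e) u w := (walk_dist hwe1).1.
have [hcM hdM] := hM e he u w hcGe.
have d1 : dist (G :\ e) u w = 1.
  apply/eqP; rewrite eqn_leq.
  rewrite (walk_dist hwe1).2 /=.
  rewrite lt0n; apply/eqP => h0.
  have [p0 [hp0 hs0]] := dist_walk' hcGe; move: hs0; rewrite h0 => /size0nil hnil.
  subst p0; move/and3P: hp0 => [_ /eqP /= huw' _].
  by have := hsimp _ huwG; rewrite huw' setUid cards1.
have [pm [hpm hsm]] := dist_walk' hcM.
have wM : walk (H :\ e) u w (dist (M :\ e) u w).
  by rewrite -hsm; apply: walk_mono MH (is_path_walk hpm).
have hdm : ((dist (M :\ e) u w)%:R <= alpha :> R)%R by rewrite d1 mulr1 in hdM.
case: (eqVneq [set u; cnt cl center u] e) => hue.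
  have sP := su1 hue.
  exists (size P + dist (M :\ e) u w + size Q); split.
    by apply: walk_trans (walk_sym wQ); apply: walk_trans wP wM.
  by right; exists (dist (M :\ e) u w); split => //; clear -sP Q2 hi; lia.
case: (eqVneq [set w; cnt cl center w] e) => hwe.
  have sQ := tw1 hwe.
  exists (size P + dist (M :\ e) u w + size Q); split.
    by apply: walk_trans (walk_sym wQ); apply: walk_trans wP wM.
  by right; exists (dist (M :\ e) u w); split => //; clear -P2 sQ hi; lia.
have [a [wa ha]] := su2 hue.
have [b [wb hb]] := tw2 hwe.
case: (eqVneq (pblock cl u) (pblock cl w)) => hpb.
  have hc : cnt cl center u = cnt cl center w by rewrite /cnt hpb.
  exists (a + b); split.
    apply: walk_trans (walk_mono AH wa) _; rewrite hc.
    exact: walk_sym (walk_mono AH wb).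
  by left; clear -ha hb hi; lia.
have [x [y [hxy wx hxye wy]]] := good_edge hclus hA2 hpp hu hw hpb huwG huwe hue hwe.
have hxyH : [set x; y] \in H :\ e.
  rewrite in_setD1 hxye /H /alg2_H !in_setU; apply/orP; left; apply/orP; left.
  apply/orP; right; apply/bigcupP; exists (pblock cl u); first exact: pblock_mem.
  apply/bigcupP; exists (pblock cl w) => //.
  by rewrite pblock_mem //= eq_sym.
exists (a + 1 + 1 + 1 + b); split.
  apply: walk_trans (walk_sym (walk_mono AH wb)).
  apply: walk_trans (walk_mono AH wy).
  apply: walk_trans (walk_edge hxyH).
  exact: walk_trans (walk_mono AH wa) (walk_mono AH wx).
by left; clear -ha hb hi; lia.
Qed.

Lemma cardU_le (T : finType) (A B : {set T}) : #|A :|: B| <= #|A| + #|B|.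
Proof. by rewrite cardsU leq_subr. Qed.

Lemma card_bigcup_le (T I : finType) (P : pred I) (F : I -> {set T}) :
  #|\bigcup_(i | P i) F i| <= \sum_(i | P i) #|F i|.
Proof.
apply: (big_ind2 (fun (U : {set T}) (n : nat) => #|U| <= n)).
- by rewrite cards0.
- by move=> U1 n1 U2 n2 h1 h2; apply: leq_trans (cardU_le _ _) (leq_add h1 h2).
- by [].
Qed.

Lemma size_bound (T : finType) (G A M : {set {set T}}) (cl : {set {set T}})
  (center : {set T} -> T) (pick : T -> {set {set T}})
  (pp : {set T} -> {set T} -> {set {set T}}) :
  alg2_pick_spec G cl center pick -> alg2_pair_spec G cl pp ->
  #|alg2_H A M cl pick pp| <= 3 * (#|A| + #|M| + #|T| + #|cl| ^ 2).
Proof.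
move=> hpick hpp.
have h1 : #|\bigcup_(v in cover cl) pick v| <= #|T|.
  apply: leq_trans (card_bigcup_le _ _) _.
  apply: leq_trans (_ : \sum_(v in cover cl) 1 <= _).
    apply: leq_sum => v hv; have := hpick v hv.
    case: ifP => _; last by move=> ->; rewrite cards0.
    by case=> x _ [_ ->]; rewrite cards1.
  by rewrite sum1_card max_card.
have h2 : #|\bigcup_(C in cl) \bigcup_(C' in cl | C' != C) pp C C'| <= #|cl| * (#|cl| * 2).
  apply: leq_trans (card_bigcup_le _ _) _.
  rewrite -sum_nat_const; apply: leq_sum => C hC.
  apply: leq_trans (card_bigcup_le _ _) _.
  rewrite -sum_nat_const big_mkcondr /=; apply: leq_sum => C' hC'.
  case: eqP => [_ //|/eqP hne].
  have hne' : C != C' by rewrite eq_sym.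
  have [_ hsp] := hpp C C' hC hC' hne'.
  move: hsp; cbv zeta.
  case: ifP => [_ [e1 [e2 [_ _ _ ->]]]|_]; first by rewrite cards2; case: (e1 != e2).
  case: ifP => [_ [e1 [e2 [_ _ _ ->]]]|hn ->]; first by rewrite cards2; case: (e1 != e2).
  apply: leq_trans (_ : 1 <= 2) => //.
  apply/card_le1_eqP => x y hx hy; apply/eqP; apply: contraFT hn => hxy.
  by apply/exists_inP; exists y => //; apply/exists_inP; exists x.
rewrite /alg2_H /alg2_Eprime.
apply: leq_trans (cardU_le _ _) _.
apply: leq_trans (leq_add (cardU_le _ _) (leqnn _)) _.
apply: leq_trans (leq_add (leq_add (cardU_le _ _) (leqnn _)) (leqnn _)) _.
have e2 : #|cl| * (#|cl| * 2) = 2 * #|cl| ^ 2 by rewrite mulnA mulnn mulnC.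
move: h1 h2; rewrite e2; lia.
Qed.

Theorem theorem3 :
  exists c : nat,
  forall (R : realFieldType) (T : finType) (G A M : {set {set T}})
    (beta : nat) (alpha : R) (cl : {set {set T}}) (center : {set T} -> T)
    (pick : T -> {set {set T}}) (pp : {set T} -> {set T} -> {set {set T}}),
    simple_graph G ->
    clustering_based G A beta cl center ->
    mult_EFT_spanner G M alpha ->
    alg2_pick_spec G cl center pick ->
    alg2_pair_spec G cl pp ->
    let H := alg2_H A M cl pick pp in
    #|H| <= c * (#|A| + #|M| + #|T| + #|cl| ^ 2) /\
    (forall e, e \in G -> forall s t, connected (G :\ e) s t ->
       connected (H :\ e) s t /\
       ((dist (H :\ e) s t)%:R <=
          (dist (G :\ e) s t)%:R + (2 * beta)%:R + Num.max 2 (alpha - 3)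
        :> R)%R).
Proof.
exists 3 => R T G A M beta alpha cl center pick pp hsimp hcb hM hpick hpp H; split.
  exact: size_bound hpick hpp.
move=> e he s t hst; exact: (stretch pick hsimp hcb hM hpp he hst).
Qed.
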